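(* Let $\hat k\ge 2$ be an integer and $n=\hat k^2$. Define $\tilde P:\mathbb{R}^n\to\mathbb{R}$ by $$\tilde P(c)=\sum_{i=1}^{n}\frac{e^{c_i}}{\sum_{v=1}^{n}e^{c_v}}\,c_i .$$ Then for all $c,c'\in\mathbb{R}^n$, $$|\tilde P(c)-\tilde P(c')|\le(\hat k^2-1)\max_{1\le i\le n}|c_i-c_i'| .$$
   Context: $\tilde P$ is the SoftPool operation applied to one $\hat k\times\hat k$ kernel region of a feature map, whose $\hat k^2$ entries are listed as the vector $c$: each entry is weighted by the softmax of the entries in the region and the weighted entries are summed. *)

(* Defs.v *)
From mathcomp Require Import all_boot all_order all_algebra.
From mathcomp Require Import reals.
From mathcomp Require Import sequences exp.
Set Implicit Arguments. Unset Strict Implicit. Unset Printing Implicit Defensive.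
Import Order.TTheory GRing.Theory Num.Theory.
Local Open Scope ring_scope.

Definition softpool (R : realType) (n : nat) (c : 'I_n -> R) : R :=
  \sum_(i < n) (expR (c i) / \sum_(v < n) expR (c v)) * c i.

(* max_i |c_i - c'_i| (nonnegative terms, so 0 is a neutral start) *)
Definition maxdist (R : realType) (n : nat) (c c' : 'I_n -> R) : R :=
  \big[Num.max/0]_(i < n) `|c i - c' i|.

(* Main.v *)
Require Import Defs.
From mathcomp Require Import all_boot all_order all_algebra.
From mathcomp Require Import reals.
From mathcomp Require Import sequences exp.
From mathcomp Require Import all_classical topology normedtype derive realfun.
From mathcomp Require Import ring lra.
Require Import Defs.
Import Order.TTheory GRing.Theory Num.Theory.
Import numFieldNormedType.Exports.
Local Open Scope ring_scope.

Lemma exp3 (R : realType) (x : R) : 0 <= x -> 3 * (x - 1) <= expR x.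
Proof.
move=> x0.
have e : expR x = expR (x/2) * expR (x/2) by rewrite -expRD; congr expR; field.
have h := expR_ge1Dx (x/2).
have h0 : 0 <= 1 + x/2 by lra.
have : (1 + x/2) * (1 + x/2) <= expR (x/2) * expR (x/2) by apply: ler_pM.
rewrite e => H.
have := sqr_ge0 (x/2 - 2); rewrite expr2 => H2.
nra.
Qed.

Lemma argmax_ex (R : realType) n (a : 'I_n -> R) : (0 < n)%N ->
  exists m, forall i, a i <= a m.
Proof.
move=> n0.
case: (@arg_maxP _ _ _ (Ordinal n0) xpredT (fun i : 'I_n => a i) isT).
move=> m _ H; exists m => i; exact: H.
Qed.

Lemma key (R : realType) n (hn : (4 <= n)%N) (a : 'I_n -> R) :
  let Z := \sum_(i<n) expR (a i) in
  let P := \sum_(i<n) (expR (a i) / Z) * a i in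
  \sum_(i<n) (expR (a i)/Z) * `|1 + a i - P| <= n%:R - 1.
Proof.
cbv zeta.
set Z := \sum_(i<n) expR (a i).
set P := \sum_(i<n) expR (a i) / Z * a i.
have n0 : (0 < n)%N by apply: leq_trans hn.
have [m Hm] := @argmax_ex R n a n0.
have ZE : Z = expR (a m) + \sum_(i < n | i != m) expR (a i) by rewrite /Z (bigD1 m).
have Zm : expR (a m) <= Z.
  rewrite ZE lerDl; apply: sumr_ge0 => i _; exact: expR_ge0.
have Z0 : 0 < Z by apply: lt_le_trans Zm; exact: expR_gt0.
have p0 i : 0 <= expR (a i) / Z by apply: divr_ge0; [exact: expR_ge0|exact: ltW].
have sp : \sum_(i<n) expR (a i) / Z = 1 by rewrite -mulr_suml -/Z divff // gt_eqF.
have Pm : P <= a m.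
  apply: le_trans (_ : \sum_(i<n) (expR (a i) / Z) * a m <= _).
    by apply: ler_sum => i _; apply: ler_wpM2l.
  by rewrite -mulr_suml sp mul1r.
have T1 i : (expR (a i)/Z) * `|1 + a i - P| <=
   (expR (a i)/Z) * (1 + a i - P) + 2 * ((expR (a i)/Z) * Num.max 0 (a m - a i - 1)).
  set p := expR (a i) / Z; set M := Num.max _ _.
  have -> : p * (1 + a i - P) + 2 * (p * M) = p * ((1 + a i - P) + 2 * M) by ring.
  apply: ler_wpM2l; first exact: p0.
  rewrite /M.
  have h1 : 0 <= Num.max 0 (a m - a i - 1) by rewrite le_max lexx.
  have h2 : a m - a i - 1 <= Num.max 0 (a m - a i - 1) by rewrite le_max lexx orbT.
  case: (lerP 0 (1 + a i - P)) => h.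
    rewrite ger0_norm //; lra.
  rewrite ltr0_norm //; lra.
apply: le_trans (ler_sum _ (fun i _ => T1 i)) _.
rewrite big_split /= -mulr_sumr.
have -> : \sum_(i<n) expR (a i) / Z * (1 + a i - P) = 1.
  under eq_bigr => i _ do rewrite mulrBr mulrDr mulr1.
  rewrite sumrB big_split /= sp -/P -mulr_suml sp mul1r; lra.
have T2 i : i != m -> expR (a i) / Z * Num.max 0 (a m - a i - 1) <= 1/3.
  move=> _.
  case: (lerP (a m - a i - 1) 0) => h.
    rewrite mulr0; lra.
  rewrite mulrAC ler_pdivrMr //.
  have x0 : 0 <= a m - a i by lra.
  have H := @exp3 R _ x0.
  have Ee : expR (a m) = expR (a m - a i) * expR (a i) by rewrite -expRD; congr expR; ring.
  have E : 0 < expR (a i) := expR_gt0 _.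
  have : 3 * (a m - a i - 1) * expR (a i) <= expR (a m - a i) * expR (a i).
    by apply: ler_wpM2r; [exact: ltW|].
  rewrite -Ee => H2.
  move: Zm; nra.
rewrite (bigD1 m) //= subrr sub0r max_l ?lerN10 // mulr0 add0r.
have S : \sum_(i < n | i != m) expR (a i) / Z * Num.max 0 (a m - a i - 1) <= (n%:R - 1) / 3.
  apply: le_trans (ler_sum _ T2) _.
  rewrite sumr_const cardC1 card_ord -[_ *+ n.-1]mulr_natr.
  have -> : (n.-1)%:R = n%:R - 1 :> R by rewrite -(prednK n0) /= -addn1 natrD addrK.
  lra.
have hn' : 4 <= n%:R :> R by rewrite (ler_nat R 4 n).
lra.
Qed.

Section Calc.
Variables (R : realType) (n : nat) (c c' : 'I_n -> R).
Let d i := c i - c' i.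
Let A i : R -> R := fun s => c' i + s * d i.
Let E i : R -> R := expR \o A i.
Let Z : R -> R := \sum_(i < n) E i.
Let N : R -> R := \sum_(i < n) (E i * A i).
Let V : R -> R := fun s => (Z s)^-1.
Let g : R -> R := N * V.

Lemma dA (i : 'I_n) (t : R) : is_derive t 1 (A i) (d i).
Proof.
have H : is_derive t 1 (cst (c' i) + d i \*: (@id R)) (0 + d i *: 1).
  apply: is_deriveD.
have -> : A i = cst (c' i) + d i \*: (@id R) by apply/funext => s; rewrite /A /= mulrC.
by move: H; rewrite add0r /GRing.scale /= mulr1.
Qed.

Lemma dE (i : 'I_n) (t : R) : is_derive t 1 (E i) (expR (A i t) * d i).
Proof. exact: (is_derive1_comp (is_derive_expR _) (dA i t)). Qed.

Hypothesis n0 : (0 < n)%N.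

Let Zd t := \sum_(i < n) expR (A i t) * d i.
Let Nd t := \sum_(i < n) (E i t *: d i + A i t *: (expR (A i t) * d i)).

Lemma ZE (t : R) : Z t = \sum_(i < n) expR (A i t).
Proof. by rewrite /Z fct_sumE. Qed.

Lemma NE (t : R) : N t = \sum_(i < n) expR (A i t) * A i t.
Proof. by rewrite /N fct_sumE. Qed.

Lemma Zpos (t : R) : 0 < Z t.
Proof.
rewrite ZE (bigD1 (Ordinal n0)) //=.
apply: lt_le_trans (expR_gt0 (A (Ordinal n0) t)) _.
rewrite lerDl; apply: sumr_ge0 => i _; exact: expR_ge0.
Qed.

Lemma dZ (t : R) : is_derive t 1 Z (Zd t).
Proof. exact: (is_derive_sum (fun i => dE i t)). Qed.

Lemma dN (t : R) : is_derive t 1 N (Nd t).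
Proof. exact: (is_derive_sum (fun i => is_deriveM (dE i t) (dA i t))). Qed.

Lemma dV (t : R) : is_derive t 1 V (- (Z t) ^- 2 *: Zd t).
Proof. apply: is_deriveV; [by rewrite gt_eqF // Zpos | exact: dZ]. Qed.

Lemma dg (t : R) : is_derive t 1 g (N t *: (- (Z t) ^- 2 *: Zd t) + V t *: Nd t).
Proof. exact: (is_deriveM (dN t) (dV t)). Qed.


Lemma le_maxdist i : `|c i - c' i| <= maxdist c c'.
Proof. by rewrite /maxdist (bigD1 i) //= le_max lexx. Qed.

Lemma gE (t : R) : g t = softpool (fun i => A i t).
Proof.
rewrite /g /V -[(N * _) t]/(N t * (Z t)^-1) NE ZE /softpool mulr_suml; apply: eq_bigr => i _.
by rewrite mulrAC.
Qed.

Lemma gbound (t : R) (hn : (4 <= n)%N) :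
  `|N t *: (- (Z t) ^- 2 *: Zd t) + V t *: Nd t| <= (n%:R - 1) * maxdist c c'.
Proof.
set S := Z t.
have S0 : S != 0 by rewrite gt_eqF // Zpos.
set P := \sum_(i<n) (expR (A i t) / \sum_(j<n) expR (A j t)) * A i t.
have PE : N t / S = P by rewrite /P NE /S ZE mulr_suml; apply: eq_bigr => i _; rewrite mulrAC.
have -> : N t *: (- S ^- 2 *: Zd t) + V t *: Nd t =
   \sum_(i<n) (expR (A i t) / S) * (d i * (1 + A i t - P)).
  rewrite -PE /Zd /Nd /V /GRing.scale /= -/S.
  have -> : \sum_(i<n) (expR (A i t) / S) * (d i * (1 + A i t - N t / S)) =
     \sum_(i<n) (S^-1 * (expR (A i t) * d i + A i t * (expR (A i t) * d i))
        - (N t * S^-2) * (expR (A i t) * d i)).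
    by apply: eq_bigr => i _; field.
  by rewrite sumrB -!mulr_sumr; field.
apply: le_trans (ler_norm_sum _ _ _) _.
apply: le_trans (_ : \sum_(i<n) (expR (A i t) / S) * (maxdist c c' * `|1 + A i t - P|) <= _).
  apply: ler_sum => i _.
  have p0 : 0 <= expR (A i t) / S by apply: divr_ge0; [exact: expR_ge0| exact: ltW (Zpos t)].
  rewrite normrM (ger0_norm p0) normrM; apply: ler_wpM2l => //.
  by apply: ler_wpM2r => //; exact: le_maxdist.
have := @key R n hn (fun i => A i t); cbv zeta; rewrite -/P.
rewrite /S ZE => K.
under eq_bigr => i _ do rewrite mulrCA.
rewrite -mulr_sumr mulrC; apply: ler_wpM2r => //.
rewrite /maxdist; apply: (big_ind (fun x => 0 <= x)) => // x y hx hy.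
by rewrite le_max hx.
Qed.

Lemma lip (hn : (4 <= n)%N) : `|softpool c - softpool c'| <= (n%:R - 1) * maxdist c c'.
Proof.
have A1 : (fun i => A i 1) = c by apply/funext => i; rewrite /A /d mul1r addrC subrK.
have A0 : (fun i => A i 0) = c' by apply/funext => i; rewrite /A mul0r addr0.
rewrite -{1}A1 -{1}A0 -!gE.
have dv (x : R) : derivable g x 1 by case: (dg x).
have [xi _ ->] := MVT ltr01 (fun x _ => dg x)
  (derivable_within_continuous (fun x _ => dv x)).
rewrite subr0 mulr1; exact: gbound.
Qed.

End Calc.

Theorem mainTheorem4 (R : realType) (k : nat) (hk : (2 <= k)%N)
  (c c' : 'I_(k ^ 2) -> R) :
  `|softpool c - softpool c'| <= ((k ^ 2)%:R - 1) * maxdist c c'.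
Proof.
have h4 : (4 <= k ^ 2)%N by have := leq_mul hk hk; rewrite mulnn.
apply: lip => //; exact: leq_trans h4.
Qed.
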